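(* Let $n\ge1$ and consider the SBCM with parameters $\gamma\ge0$, $\delta\ge0$ on the path graph $P_n$ with nodes $1,2,\ldots,n+2$ (edges $\{k,k+1\}$), where nodes $1$ and $n+2$ are zealots with opinions $-(n+1)/2$ and $(n+1)/2$ respectively, and nodes $2,\ldots,n+1$ are persuadable. Let $\bar{\mathbf{x}}$ be the harmonic state $\bar x_k=k-\frac{n+3}{2}$ (so adjacent nodes have opinions differing by exactly $1$), which is a steady state for every $\gamma$. Let $v=\omega(1)=\frac{1}{1+e^{\gamma-\gamma\delta}}$ and $g(\gamma)=2\gamma(1-v)-1$. Then $\bar{\mathbf{x}}$ is linearly stable if and only if $g(\gamma)<0$, and is linearly unstable if and only if $g(\gamma)>0$.
   Context: The SBCM on a graph with zealots $\mathcal{Z}$ and persuadable nodes $\mathcal{P}$: with $w(x_i,x_j)=\omega(|x_i-x_j|)=\frac{1}{1+e^{\gamma(x_i-x_j)^2-\gamma\delta}}$ for adjacent $i\sim j$ and $0$ otherwise, the dynamics are $\frac{dx_i}{dt}=f_i(\mathbf{x})=\frac{\sum_j w(x_i,x_j)(x_j-x_i)}{\sum_j w(x_i,x_j)}$ for $i\in\mathcal{P}$ and $\frac{dx_i}{dt}=0$ for zealots. A steady state is linearly stable if all eigenvalues of $\mathbf{J}_{\mathcal{P}}=(\partial f_i/\partial x_j)_{i,j\in\mathcal{P}}$ at it are strictly negative, and linearly unstable if $\mathbf{J}_{\mathcal{P}}$ has a strictly positive eigenvalue. *)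

(* Defs.v *)
From HB Require Import structures.
From mathcomp Require Import all_boot all_order all_algebra.
From mathcomp Require Import all_classical all_reals all_analysis.
From mathcomp Require Import complex.
Set Implicit Arguments. Unset Strict Implicit. Unset Printing Implicit Defensive.
Import Order.TTheory GRing.Theory Num.Theory.
Local Open Scope ring_scope.

Section SBCM.
Variable R : realType.

Definition omega (gamma delta r : R) : R :=
  1 / (1 + expR (gamma * r ^+ 2 - gamma * delta)).

Definition sbcm_w (N : nat) (adj : rel 'I_N) (gamma delta : R)
  (x : 'I_N -> R) (i j : 'I_N) : R :=
  if adj i j then omega gamma delta `|x i - x j| else 0.

Definition sbcm_f (N : nat) (adj : rel 'I_N) (gamma delta : R)
  (x : 'I_N -> R) (i : 'I_N) : R :=
  (\sum_(j < N) sbcm_w adj gamma delta x i j * (x j - x i))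
  / (\sum_(j < N) sbcm_w adj gamma delta x i j).

(* J_P: Jacobian restricted to the persuadable nodes, enumerated by
   pinj : 'I_m -> 'I_N; entry (i,j) = d f_{pinj i} / d x_{pinj j} at xs. *)
Definition sbcm_JP (N m : nat) (adj : rel 'I_N) (pinj : 'I_m -> 'I_N)
  (gamma delta : R) (xs : 'I_N -> R) : 'M[R]_m :=
  \matrix_(i < m, j < m)
    derive1 (fun t : R => sbcm_f adj gamma delta
        (fun k => if k == pinj j then t else xs k) (pinj i)) (xs (pinj j)).

(* eigenvalues are taken in the complex numbers *)
Definition cmx (m : nat) (A : 'M[R]_m) : 'M[complex.complex R]_m :=
  map_mx (fun r => complex.Complex r 0) A.

Definition linearly_stable (m : nat) (J : 'M[R]_m) : Prop :=
  forall lam : complex.complex R, eigenvalue (cmx J) lam -> lam < 0.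

Definition linearly_unstable (m : nat) (J : 'M[R]_m) : Prop :=
  exists lam : complex.complex R, eigenvalue (cmx J) lam /\ 0 < lam.

(* Path graph on n+2 nodes; node k (1-based) is index k-1. *)
Definition path_adj (n : nat) : rel 'I_n.+2 :=
  fun i j => (i.+1 == j :> nat) || (j.+1 == i :> nat).

(* persuadable nodes 2..n+1 = indices 1..n *)
Definition path_pinj (n : nat) (i : 'I_n) : 'I_n.+2 :=
  lift ord0 (widen_ord (leqnSn n) i).

(* harmonic state: xbar_k = k - (n+3)/2 for node k = index+1 ;
   zealots get -(n+1)/2 and (n+1)/2 *)
Definition path_xbar (n : nat) (k : 'I_n.+2) : R :=
  (k.+1)%:R - (n.+3)%:R / 2.

Definition path_JP (n : nat) (gamma delta : R) : 'M[R]_n :=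
  sbcm_JP (@path_adj n) (@path_pinj n) gamma delta (@path_xbar n).

End SBCM.

(* Main.v *)
Set Warnings "-all".
Require Import Defs.
From HB Require Import structures.
From mathcomp Require Import all_boot all_order all_algebra.
From mathcomp Require Import all_classical all_reals all_analysis.
From mathcomp Require Import complex.
From mathcomp Require Import zify ring lra.
Import Order.TTheory GRing.Theory Num.Theory.
Local Open Scope ring_scope.
Set Implicit Arguments. Unset Strict Implicit. Unset Printing Implicit Defensive.
Section B.
Variable R : realType.

Lemma Re_sum n (F : 'I_n -> R[i]) : complex.Re (\sum_(i < n) F i)%R = \sum_(i < n) complex.Re (F i).
Proof.
apply: (big_rec2 (fun (x : R[i]) (y : R) => complex.Re x = y)) => // k x y _ <-.
by case: (F k); case: x.
Qed.

Lemma Im_sum n (F : 'I_n -> R[i]) : complex.Im (\sum_(i < n) F i)%R = \sum_(i < n) complex.Im (F i).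
Proof.
apply: (big_rec2 (fun (x : R[i]) (y : R) => complex.Im x = y)) => // k x y _ <-.
by case: (F k); case: x.
Qed.

Lemma Re_mulR (z : R[i]) (r : R) : complex.Re (z * complex.Complex r 0) = complex.Re z * r.
Proof. by case: z => a b /=; rewrite mulr0 subr0. Qed.

Lemma Im_mulR (z : R[i]) (r : R) : complex.Im (z * complex.Complex r 0) = complex.Im z * r.
Proof. by case: z => a b /=; rewrite mulr0 add0r. Qed.

Lemma Re_mul (l z : R[i]) : complex.Re (l * z) = complex.Re l * complex.Re z - complex.Im l * complex.Im z.
Proof. by case: l => a b; case: z. Qed.

Lemma Im_mul (l z : R[i]) : complex.Im (l * z) = complex.Re l * complex.Im z + complex.Im l * complex.Re z.
Proof. by case: l => a b; case: z => c d /=; ring. Qed.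

Definition Mm n : 'M[R]_n := \matrix_(i < n, j < n)
  ((i == j)%:R - ((i == j.+1 :> nat)%:R + (i.+1 == j :> nat)%:R) / 2).

Definition ext n (x : 'I_n -> R) (k : nat) : R := oapp x 0 (insub k).

Lemma extE n (x : 'I_n -> R) (i : 'I_n) : ext x i = x i.
Proof. by rewrite /ext valK. Qed.

Lemma ext_out n (x : 'I_n -> R) k : (n <= k)%N -> ext x k = 0.
Proof. by move=> h; rewrite /ext insubF // ltnNge h. Qed.

Lemma sum_ind n (x : 'I_n -> R) k :
  \sum_(i < n) (i == k :> nat)%:R * x i = ext x k.
Proof.
case: (ltnP k n) => hk.
  rewrite (bigD1 (Ordinal hk)) //= eqxx mul1r big1 ?addr0.
    by rewrite -[k]/(nat_of_ord (Ordinal hk)) extE.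
  move=> i hi; case: eqP => [e|]; last by rewrite mul0r.
  by move: hi; rewrite -(inj_eq val_inj) /= e eqxx.
rewrite ext_out // big1 // => i _; case: eqP => [e|]; last by rewrite mul0r.
by move: (ltn_ord i); rewrite e ltnNge hk.
Qed.

Definition QF n (x : 'I_n -> R) := \sum_(j < n) (\sum_(i < n) x i * Mm n i j) * x j.

Lemma sum_comb n (f g h : 'I_n -> R) :
  \sum_(i < n) (f i - (g i + h i) / 2) = \sum_(i < n) f i - (\sum_(i < n) g i + \sum_(i < n) h i) / 2.
Proof. by rewrite sumrB -mulr_suml big_split. Qed.

Lemma QF_E n (x : 'I_n -> R) :
  QF x = \sum_(k < n) ext x k ^+ 2 - \sum_(k < n) ext x k * ext x k.+1.
Proof.
rewrite /QF.
rewrite (eq_bigr (fun j : 'I_n => \sum_(i < n) ((i == j :> nat)%:R * x i * x j -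
   ((i == j.+1 :> nat)%:R * x i * x j + (i.+1 == j :> nat)%:R * x i * x j) / 2))); last first.
  move=> j _; rewrite mulr_suml; apply: eq_bigr => i _; rewrite mxE.
  have -> : (i == j) = (i == j :> nat) by [].
  ring.
under eq_bigr do rewrite sum_comb.
rewrite sum_comb.
have L1 : \sum_(j < n) \sum_(i < n) (i == j :> nat)%:R * x i * x j = \sum_(k < n) ext x k ^+ 2.
  apply: eq_bigr => j _; rewrite -mulr_suml sum_ind extE; ring.
have L2 : \sum_(j < n) \sum_(i < n) (i == j.+1 :> nat)%:R * x i * x j = \sum_(k < n) ext x k * ext x k.+1.
  apply: eq_bigr => j _; rewrite -mulr_suml sum_ind extE; ring.
have L3 : \sum_(j < n) \sum_(i < n) (i.+1 == j :> nat)%:R * x i * x j = \sum_(k < n) ext x k * ext x k.+1.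
  rewrite exchange_big; apply: eq_bigr => i _.
  rewrite (eq_bigr (fun j : 'I_n => x i * ((j == i.+1 :> nat)%:R * x j))); last first.
    by move=> j _; rewrite eq_sym; ring.
  by rewrite -mulr_sumr sum_ind extE.
by rewrite L1 L2 L3; field.
Qed.

Lemma sos_id (X : nat -> R) m :
  2 * (\sum_(k < m) X k ^+ 2 - \sum_(k < m) X k * X k.+1) =
  X 0%N ^+ 2 + \sum_(k < m) (X k - X k.+1) ^+ 2 - X m ^+ 2.
Proof.
elim: m => [|m IH]; first by rewrite !big_ord0; ring.
rewrite !big_ord_recr /=.
have -> : 2 * (\sum_(i < m) X i ^+ 2 + X m ^+ 2 - (\sum_(i < m) X i * X i.+1 + X m * X m.+1))
  = 2 * (\sum_(k < m) X k ^+ 2 - \sum_(k < m) X k * X k.+1) + 2 * (X m ^+ 2 - X m * X m.+1) by ring.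
rewrite IH; ring.
Qed.

Lemma QF_sos n (x : 'I_n -> R) :
  2 * QF x = ext x 0%N ^+ 2 + \sum_(k < n) (ext x k - ext x k.+1) ^+ 2.
Proof. by rewrite QF_E sos_id (@ext_out n x n (leqnn n)) expr0n /= subr0. Qed.

Lemma QF_ge0 n (x : 'I_n -> R) : 0 <= QF x.
Proof.
have : 0 <= 2 * QF x.
  by rewrite QF_sos addr_ge0 ?sqr_ge0 // sumr_ge0 // => k _; rewrite sqr_ge0.
by rewrite pmulr_rge0.
Qed.

Lemma QF_eq0 n (x : 'I_n -> R) : QF x = 0 -> forall i, x i = 0.
Proof.
move=> h.
have h2 : ext x 0%N ^+ 2 + \sum_(k < n) (ext x k - ext x k.+1) ^+ 2 = 0 by rewrite -QF_sos h mulr0.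
have hs : 0 <= \sum_(k < n) (ext x k - ext x k.+1) ^+ 2 by apply: sumr_ge0 => k _; rewrite sqr_ge0.
move/eqP: h2; rewrite paddr_eq0 ?sqr_ge0 // => /andP[/eqP h0 /eqP hsum].
have hk := psumr_eq0P (fun (k : 'I_n) _ => sqr_ge0 (ext x k - ext x k.+1)) hsum.
have e0 : ext x 0%N = 0 by apply/eqP; rewrite -sqrf_eq0 h0.
have all0 : forall k, (k <= n)%N -> ext x k = 0.
  elim=> [//|k IH] hkn.
  have hkn' : (k < n)%N by [].
  have := hk (Ordinal hkn') isT; move/eqP; rewrite sqrf_eq0 subr_eq0 /= => /eqP <-.
  by apply: IH; apply: ltnW.
move=> i; rewrite -extE; apply: all0; exact: ltnW.
Qed.

Lemma Mm_sym n (i j : 'I_n) : Mm n i j = Mm n j i.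
Proof. by rewrite !mxE eq_sym; congr (_ - _ / 2); rewrite addrC; congr (_ + _); rewrite eq_sym. Qed.

Definition Bf n (J : 'M[R]_n) (x y : 'I_n -> R) := \sum_(j < n) (\sum_(i < n) x i * J i j) * y j.
Definition Sd n (x y : 'I_n -> R) := \sum_(j < n) x j * y j.

Lemma Bf_sym n (J : 'M[R]_n) x y : (forall i j, J i j = J j i) -> Bf J x y = Bf J y x.
Proof.
move=> hs; rewrite /Bf.
under eq_bigr do rewrite mulr_suml.
under [RHS]eq_bigr do rewrite mulr_suml.
rewrite exchange_big; apply: eq_bigr => i _; apply: eq_bigr => j _.
by rewrite hs; ring.
Qed.

Lemma Bf_form n (J : 'M[R]_n) x y z (al be : R) :
  (forall j, \sum_(i < n) x i * J i j = al * x j + be * z j) ->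
  Bf J x y = al * Sd x y + be * Sd z y.
Proof.
move=> h; rewrite /Bf /Sd (eq_bigr (fun j => al * (x j * y j) + be * (z j * y j))); last first.
  by move=> j _; rewrite h; ring.
by rewrite big_split /= -!mulr_sumr.
Qed.

Lemma Bf_QF n (J : 'M[R]_n) c x : (forall i j, J i j = c * Mm n i j) -> Bf J x x = c * QF x.
Proof.
move=> h; rewrite /Bf /QF big_distrr /=; apply: eq_bigr => j _.
rewrite !mulr_suml mulr_sumr; apply: eq_bigr => i _; rewrite h; ring.
Qed.

Lemma eig_sign n (J : 'M[R]_n) (c : R) (lam : R[i]) :
  (forall i j, J i j = c * Mm n i j) ->
  eigenvalue (cmx J) lam ->
  complex.Im lam = 0 /\ exists S T : R, 0 < S /\ 0 < T /\ complex.Re lam * S = c * T.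
Proof.
move=> hJ /eigenvalueP [v hv vn0].
pose a := fun i => complex.Re (v 0 i).
pose b := fun i => complex.Im (v 0 i).
pose p := complex.Re lam. pose q := complex.Im lam.
have hsym : forall i j, J i j = J j i by move=> i j; rewrite !hJ Mm_sym.
have hRe : forall j, \sum_(i < n) a i * J i j = p * a j + (- q) * b j.
  move=> j; have e : (v *m cmx J) 0 j = (lam *: v) 0 j by rewrite hv.
  move: e; rewrite !mxE => e.
  transitivity (complex.Re (lam * v 0 j)); last by rewrite Re_mul /p /a /b /q; ring.
  rewrite -e Re_sum; apply: eq_bigr => i _; by rewrite /cmx mxE Re_mulR.
have hIm : forall j, \sum_(i < n) b i * J i j = p * b j + q * a j.
  move=> j; have e : (v *m cmx J) 0 j = (lam *: v) 0 j by rewrite hv.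
  move: e; rewrite !mxE => e.
  transitivity (complex.Im (lam * v 0 j)); last by rewrite Im_mul /p /a /b /q; ring.
  rewrite -e Im_sum; apply: eq_bigr => i _; by rewrite /cmx mxE Im_mulR.
have Bab := Bf_form b hRe.
have Baa := Bf_form a hRe.
have Bba := Bf_form a hIm.
have Bbb := Bf_form b hIm.
have Sab : Sd a b = Sd b a by apply: eq_bigr => j _; rewrite mulrC.
have symab := Bf_sym a b hsym.
rewrite Bab Bba Sab in symab.
have QFa := Bf_QF a hJ. have QFb := Bf_QF b hJ.
rewrite Baa in QFa. rewrite Bbb in QFb.
have v0 : (forall i, a i = 0) -> (forall i, b i = 0) -> False.
  move=> ha hb; move/eqP: vn0; apply; apply/rowP => i; rewrite mxE.
  have := ha i; have := hb i; rewrite /a /b; case: (v 0 i) => x y /= -> ->. done.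
have Sge : 0 <= Sd a a + Sd b b.
  by rewrite addr_ge0 // sumr_ge0 // => i _; rewrite -expr2 sqr_ge0.
have Sd_eq0 : forall x : 'I_n -> R, Sd x x = 0 -> forall i, x i = 0.
  move=> x hx i.
  have hs : \sum_(k < n) x k ^+ 2 = 0.
    by rewrite -[RHS]hx /Sd; apply: eq_bigr => k _; rewrite expr2.
  have := @psumr_eq0P _ _ _ _ (fun (k : 'I_n) _ => (sqr_ge0 (x k))) hs i isT.
  by move/eqP; rewrite sqrf_eq0 => /eqP.
have Sdge : forall x : 'I_n -> R, 0 <= Sd x x.
  by move=> x; rewrite sumr_ge0 // => i _; rewrite -expr2 sqr_ge0.
have Sgt : 0 < Sd a a + Sd b b.
  rewrite lt_def Sge andbT; apply/negP => /eqP h0.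
  move/eqP: h0; rewrite paddr_eq0 // => /andP[/eqP h1 /eqP h2].
  exact: v0 (Sd_eq0 _ h1) (Sd_eq0 _ h2).
have Tgt : 0 < QF a + QF b.
  rewrite lt_def addr_ge0 ?QF_ge0 // andbT; apply/negP => /eqP h0.
  move/eqP: h0; rewrite paddr_eq0 ?QF_ge0 // => /andP[/eqP h1 /eqP h2].
  exact: v0 (QF_eq0 h1) (QF_eq0 h2).
have hq : q * (Sd a a + Sd b b) = 0.
  rewrite -Sab in symab. rewrite mulrDr. 
  have : - q * Sd b b = q * Sd a a by move: symab => /addrI.
  rewrite mulNr => /eqP; rewrite eq_sym -subr_eq0 opprK => /eqP. done.
split.
  by move/eqP: hq; rewrite mulf_eq0 (gt_eqF Sgt) orbF => /eqP.
exists (Sd a a + Sd b b), (QF a + QF b); split => //; split => //.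
rewrite [RHS]mulrDr -QFa -QFb -/p Sab; ring.

Qed.

End B.

Section S.
Variable R : realType.
Variables (ga de : R).

Lemma hx (x : R) : is_derive x (1:R) (fun u : R => u ^+ 2) (2 * x).
Proof.
have := @is_deriveX R R (@id R) 2 x 1 1 (is_derive_id _ _).
rewrite /= expr1 => h; apply: is_derive_eq h _; exact: mulr1.
Qed.

Lemma h1 (x : R) : is_derive x (1:R) (fun u : R => ga * u ^+ 2 - ga * de) (ga * (2 * x)).
Proof.
have h := is_deriveB (is_deriveZ ga (hx x)) (is_derive_cst (ga * de) x 1).
rewrite subr0 in h. exact: h.
Qed.

Definition E (u : R) : R := expR (ga * u ^+ 2 - ga * de).
Lemma hE (x : R) : is_derive x (1:R) E (E x * (ga * (2 * x))).
Proof.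
exact: (is_derive1_comp (is_derive_expR _) (h1 x)).
Qed.

Lemma hom (x : R) : is_derive x (1:R) (omega ga de) (- (E x * (ga * (2 * x))) / (1 + E x) ^+ 2).
Proof.
have h0 : 1 + E x != 0.
  by apply: lt0r_neq0; apply: addr_gt0 => //; exact: expR_gt0.
have h2 : is_derive x (1:R) (fun y => 1 + E y) (E x * (ga * (2 * x))).
  have := is_deriveD (is_derive_cst (1:R) x 1) (hE x). rewrite add0r. exact.
have h := @is_deriveV R (fun y => 1 + E y) x _ _ h0 h2.
have e : omega ga de = (fun y : R => (1 + E y)^-1).
  by apply/funext => y; rewrite /omega div1r.
rewrite e; apply: is_derive_eq h _.
change (- (1 + E x) ^- 2 * (E x * (ga * (2 * x))) = - (E x * (ga * (2 * x))) / (1 + E x) ^+ 2).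
by rewrite mulNr [RHS]mulNr mulrC.
Qed.

Definition om' (u : R) := - (E u * (ga * (2 * u))) / (1 + E u) ^+ 2.
Definition ph (u : R) := omega ga de u * u.
Definition ph' (u : R) := omega ga de u * 1 + u * om' u.

Lemma hph (x : R) : is_derive x (1:R) ph (ph' x).
Proof.
have := is_deriveM (hom x) (is_derive_id x (1:R)).
move=> h; apply: is_derive_eq h _. rewrite /ph' /om' addrC. done.
Qed.

Lemma omega_abs u : omega ga de `|u| = omega ga de u.
Proof. by rewrite /omega real_normK // num_real. Qed.

Lemma omegaN u : omega ga de (- u) = omega ga de u.
Proof. by rewrite /omega sqrrN. Qed.

Lemma om'N u : om' (- u) = - om' u.
Proof. by rewrite /om' /E sqrrN !mulrN !mulNr opprK. Qed.

Lemma ph'N u : ph' (- u) = ph' u.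
Proof. by rewrite /ph' omegaN om'N mulNr mulrN opprK. Qed.

Lemma sum_adj n (i : 'I_n) (F : 'I_n.+2 -> R) :
  \sum_(k < n.+2) (if path_adj (path_pinj i) k then F k else 0) = F (inord i) + F (inord i.+2).
Proof.
have := ltn_ord i => hin.
have hi : (i < n.+2)%N by lia.
have hi2 : (i.+2 < n.+2)%N by lia.
have vp : (path_pinj i : nat) = i.+1 by [].
have e1 : path_adj (path_pinj i) (inord i).
  by rewrite /path_adj vp inordK // eqxx orbT.
have e2 : path_adj (path_pinj i) (inord i.+2).
  by rewrite /path_adj vp inordK // eqxx.
have e3 : (inord i.+2 != inord i :> 'I_n.+2).
  by rewrite -(inj_eq val_inj) /= !inordK //; apply/eqP; lia.
rewrite (bigD1 (inord i)) // (bigD1 (inord i.+2)) //= ?e3 e1 e2 big1 ?addr0 //.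
move=> k /andP[k1 k2]; case: ifP => // /orP[] /eqP e.
  by move: k2; rewrite -(inj_eq val_inj) /= inordK // -e vp eqxx.
by move: e; rewrite vp => -[] e; move: k1; rewrite -(inj_eq val_inj) /= inordK // e eqxx.
Qed.

Definition xt n (p : 'I_n.+2) (t : R) : 'I_n.+2 -> R :=
  fun k => if k == p then t else @path_xbar R n k.
Arguments xt {n}.

Lemma f_rewrite n (i : 'I_n) (p : 'I_n.+2) (t : R) :
  sbcm_f (@path_adj n) ga de (xt p t) (path_pinj i) =
  (ph (xt p t (inord i) - xt p t (path_pinj i)) + ph (xt p t (inord i.+2) - xt p t (path_pinj i))) /
  (omega ga de (xt p t (inord i) - xt p t (path_pinj i)) + omega ga de (xt p t (inord i.+2) - xt p t (path_pinj i))).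
Proof.
rewrite /sbcm_f /sbcm_w.
rewrite (eq_bigr (fun k => if path_adj (path_pinj i) k then ph (xt p t k - xt p t (path_pinj i)) else 0)); last first.
  move=> k _; case: ifP => _; last by rewrite mul0r.
  by rewrite /ph distrC omega_abs.
rewrite !sum_adj.
by rewrite !(distrC (xt p t (path_pinj i))) !omega_abs.
Qed.

Lemma hxt n (p k : 'I_n.+2) (t0 : R) : is_derive t0 (1:R) (fun t => xt p t k) ((k == p)%:R).
Proof.
rewrite /xt; case: (k == p) => /=.
  exact: is_derive_id.
exact: is_derive_cst.
Qed.

Lemma hdiff n (p k l : 'I_n.+2) (t0 : R) :
  is_derive t0 (1:R) (fun t => xt p t k - xt p t l) ((k == p)%:R - (l == p)%:R).
Proof. have h := is_deriveB (hxt p k t0) (hxt p l t0); exact: h. Qed.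

Lemma omega_gt0 u : 0 < omega ga de u.
Proof. by rewrite /omega div1r invr_gt0 addr_gt0 // expR_gt0. Qed.

Lemma xt0 n (p k : 'I_n.+2) : xt p (@path_xbar R n p) k = @path_xbar R n k.
Proof. by rewrite /xt; case: eqP => // ->. Qed.

Lemma xbar_diffL n (i : 'I_n) :
  @path_xbar R n (inord i) - @path_xbar R n (path_pinj i) = -1.
Proof.
have := ltn_ord i => hin.
rewrite /path_xbar inordK; last by lia.
have -> : ((path_pinj i : nat) = i.+1) by [].
have -> : (i.+2)%:R = (i.+1)%:R + 1 :> R by rewrite natr1.
ring.
Qed.

Lemma xbar_diffR n (i : 'I_n) :
  @path_xbar R n (inord i.+2) - @path_xbar R n (path_pinj i) = 1.
Proof.
have := ltn_ord i => hin.
rewrite /path_xbar inordK; last by lia.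
have -> : ((path_pinj i : nat) = i.+1) by [].
have -> : (i.+3)%:R = (i.+1)%:R + 1 + 1 :> R by rewrite !natr1.
have -> : (i.+2)%:R = (i.+1)%:R + 1 :> R by rewrite natr1.
ring.
Qed.

Lemma JP_entry n (i j : 'I_n) :
  path_JP n ga de i j =
  (omega ga de (-1) + omega ga de 1)^-1 *
    (ph' (-1) * (((inord i : 'I_n.+2) == path_pinj j)%:R - (path_pinj i == path_pinj j)%:R)
   + ph' 1 * (((inord i.+2 : 'I_n.+2) == path_pinj j)%:R - (path_pinj i == path_pinj j)%:R)).
Proof.
rewrite /path_JP /sbcm_JP mxE derive1E.
set p := path_pinj j. set i' := path_pinj i. set t0 := @path_xbar R n p.
pose A t := xt p t (inord i) - xt p t i'.
pose B t := xt p t (inord i.+2) - xt p t i'.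
rewrite (_ : (fun t => _) = (fun t => (ph (A t) + ph (B t)) / (omega ga de (A t) + omega ga de (B t)))); last first.
  by apply/funext => t; exact: f_rewrite.
have hA := hdiff p (inord i) i' t0.
have hB := hdiff p (inord i.+2) i' t0.
have hphA := is_derive1_comp (hph (A t0)) hA.
have hphB := is_derive1_comp (hph (B t0)) hB.
have homA := is_derive1_comp (hom (A t0)) hA.
have homB := is_derive1_comp (hom (B t0)) hB.
have hN := is_deriveD hphA hphB.
have hD := is_deriveD homA homB.
have D0 : omega ga de (A t0) + omega ga de (B t0) != 0.
  by apply: lt0r_neq0; apply: addr_gt0; apply: omega_gt0.
have hDinv := @is_deriveV R (fun t => omega ga de (A t) + omega ga de (B t)) t0 _ _ D0 hD.
have hF := is_deriveM hN hDinv.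
have At0 : A t0 = -1 by rewrite /A !xt0 xbar_diffL.
have Bt0 : B t0 = 1 by rewrite /B !xt0 xbar_diffR.
have [_ ->] : is_derive t0 1 (fun t : R =>
        (ph (A t) + ph (B t)) / (omega ga de (A t) + omega ga de (B t))) _ := hF.
have N0 : (ph \o A + (ph \o B)) t0 = 0.
  change (ph (A t0) + ph (B t0) = 0). by rewrite At0 Bt0 /ph omegaN mulrN1 mulr1 addNr.
rewrite N0 scale0r add0r At0 Bt0. done.
Qed.
Definition gg := 2 * ga * (1 - omega ga de 1) - 1.
Lemma ph'1 : ph' 1 = - omega ga de 1 * gg.
Proof.
rewrite /gg /ph' /om' /omega -/(E 1).
have h : 1 + E 1 != 0 by apply: lt0r_neq0; apply: addr_gt0 => //; exact: expR_gt0.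
by field.
Qed.

Lemma JP_M n (i j : 'I_n) : path_JP n ga de i j = gg * Mm R n i j.
Proof.
have := ltn_ord i => hin.
rewrite JP_entry ph'N ph'1 omegaN mxE.
have e1 : ((inord i : 'I_n.+2) == path_pinj j) = (i == j.+1 :> nat).
  by rewrite -(inj_eq val_inj) /= inordK //; lia.
have e2 : ((inord i.+2 : 'I_n.+2) == path_pinj j) = (i.+1 == j :> nat).
  by rewrite -(inj_eq val_inj) /= inordK //; lia.
have e3 : (path_pinj i == path_pinj j) = (i == j).
  by rewrite -(inj_eq val_inj) /= -(inj_eq val_inj).
rewrite e1 e2 e3.
have h : omega ga de 1 != 0 by apply: lt0r_neq0; exact: omega_gt0.
field; by apply: lt0r_neq0; apply: addr_gt0; exact: omega_gt0.
Qed.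
End S.

Theorem lemma3 (R : realType) (n : nat) (gamma delta : R) :
  (1 <= n)%N -> 0 <= gamma -> 0 <= delta ->
  let v := omega gamma delta 1 in
  let g := 2 * gamma * (1 - v) - 1 in
  (linearly_stable (path_JP n gamma delta) <-> g < 0) /\
  (linearly_unstable (path_JP n gamma delta) <-> 0 < g).
Proof.
move=> hn hga hde v g.
have hJ : forall i j, path_JP n gamma delta i j = g * Mm R n i j.
  by move=> i j; rewrite JP_M.
have ex : exists lam, eigenvalue (cmx (path_JP n gamma delta)) lam.
  have : size (char_poly (cmx (path_JP n gamma delta))) != 1%N.
    by rewrite size_char_poly eqSS -lt0n.
  move/closed_rootP => [x hx]; exists x; by rewrite eigenvalue_root_char.
split; split.
- move=> st; have [l hl] := ex.
  have := st l hl; rewrite ltcE => /andP[_ hp].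
  have [_ [S [T [hS [hT e]]]]] := eig_sign hJ hl.
  move: hp => /= hp. nra.
- move=> hg l hl.
  have [hq [S [T [hS [hT e]]]]] := eig_sign hJ hl.
  rewrite ltcE /= hq eqxx /=. nra.
- move=> [l [hl hp]].
  move: hp; rewrite ltcE => /andP[_ hp].
  have [_ [S [T [hS [hT e]]]]] := eig_sign hJ hl.
  move: hp => /= hp. nra.
- move=> hg; have [l hl] := ex; exists l; split => //.
  have [hq [S [T [hS [hT e]]]]] := eig_sign hJ hl.
  rewrite ltcE /= hq eqxx /=. nra.
Qed.
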